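(* Let $4\le p<n$ and let $a^\top x\le a_0$ be a facet defining inequality for $P^p_{0,n}(D)$. Let $\gamma$ be the maximum of $a(C)=\sum_{(i,j)\in C}a_{ij}$ over all simple directed cycles $C$ in $D$ with exactly $p$ arcs (such cycles use only internal nodes $1,\dots,n-1$). Set $a_{ni}:=a_{0i}$ for $i=1,\dots,n-1$. Then the inequality $$\sum_{i=1}^n\sum_{j=1,\,j\neq i}^n a_{ij}x_{ij}+(\gamma-a_0)\,x(\delta^+(n))\le\gamma$$ defines a facet of the $p$-cycle polytope $P^p_C(D_n)$.
   Context: Let $n$ be a positive integer, $V=\{0,1,\dots,n\}$, and let $D=(V,A)$ be the digraph whose arc set $A$ consists of all ordered pairs $(i,j)$ with $i\neq j$, $i,j\in V$, except that no arc enters node $0$, no arc leaves node $n$, and the arc $(0,n)$ is absent. A $(0,n)$-$p$-path is a simple directed path in $D$ from $0$ to $n$ with exactly $p$ arcs; $P^p_{0,n}(D)\subseteq\mathbb{R}^A$ is the convex hull of their incidence vectors. $D_n$ is the complete digraph on node set $\{1,\dots,n\}$ (all arcs $(i,j)$, $i\neq j$), and $P^p_C(D_n)$ is the convex hull in $\mathbb{R}^{A(D_n)}$ of the incidence vectors of all simple directed cycles in $D_n$ with exactly $p$ arcs. In $D_n$, $\delta^+(n)$ is the set of arcs leaving $n$ and $x(F)=\sum_{e\in F}x_e$. The coefficients $a_{in}$ ($1\le i\le n-1$) and $a_{ij}$ ($1\le i\neq j\le n-1$) are those of the given inequality on $D$. *)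

(* Defs.v *)
From mathcomp Require Import all_boot all_order all_algebra.
Unset Printing Implicit Defensive.
Import Order.TTheory GRing.Theory Num.Theory.
Local Open Scope ring_scope.

Section Polyhedra.
Variables (R : realFieldType) (T : finType).

Definition dotp (a x : T -> R) : R := \sum_(e : T) a e * x e.

Definition in_conv (S : (T -> R) -> Prop) (x : T -> R) : Prop :=
  exists (ps : seq (T -> R)) (lam : nat -> R),
    (forall i, (i < size ps)%N -> S (nth (fun _ => 0) ps i) /\ 0 <= lam i) /\
    \sum_(i < size ps) lam i = 1 /\
    forall e, x e = \sum_(i < size ps) lam i * nth (fun _ => 0) ps i e.

Definition aff_indep (ps : seq (T -> R)) : Prop :=
  forall lam : nat -> R,
    \sum_(i < size ps) lam i = 0 ->
    (forall e, \sum_(i < size ps) lam i * nth (fun _ => 0) ps i e = 0) ->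
    forall i, (i < size ps)%N -> lam i = 0.

(* aff_rank P r : the maximum number of affinely independent points of P is r,
   i.e. dim P = r - 1 (with dim of the empty set = -1) *)
Definition aff_rank (P : (T -> R) -> Prop) (r : nat) : Prop :=
  (exists ps : seq (T -> R), size ps = r /\
     (forall i, (i < size ps)%N -> P (nth (fun _ => 0) ps i)) /\ aff_indep ps) /\
  (forall ps : seq (T -> R),
     (forall i, (i < size ps)%N -> P (nth (fun _ => 0) ps i)) ->
     aff_indep ps -> (size ps <= r)%N).

Definition facet_defining (P : (T -> R) -> Prop) (a : T -> R) (a0 : R) : Prop :=
  (forall x, P x -> dotp a x <= a0) /\
  exists r : nat, aff_rank P r.+1 /\ aff_rank (fun x => P x /\ dotp a x = a0) r.

End Polyhedra.

(* Nodes are ordinals 'I_n.+1 = {0,...,n}; node 0 is ord0, node n is ord_max. *)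
Definition node n := 'I_n.+1.

Definition arcD n (e : node n * node n) : bool :=
  [&& e.1 != e.2, e.2 != ord0, e.1 != ord_max & e != (ord0, ord_max)].

(* arcs of the complete digraph D_n on {1,...,n} (nodes 1..n of 'I_n.+1) *)
Definition arcDn n (e : node n * node n) : bool :=
  [&& e.1 != e.2, e.1 != ord0 & e.2 != ord0].

Definition arcTD n := {e : node n * node n | arcD n e}.
Definition arcTDn n := {e : node n * node n | arcDn n e}.

Definition path_arcs n (s : seq (node n)) := zip s (behead s).
Definition cycle_arcs n (c : seq (node n)) := zip c (rot 1 c).

Definition is_0n_path n p (s : seq (node n)) : bool :=
  [&& size s == p.+1, uniq s, head ord0 s == ord0, last ord0 s == ord_max
    & all (arcD n) (path_arcs n s)].

Definition is_p_cycle n (A : pred (node n * node n)) p (c : seq (node n)) : bool :=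
  [&& size c == p, uniq c & all A (cycle_arcs n c)].

Definition incid (R : realFieldType) n (A : pred (node n * node n))
    (arcs : seq (node n * node n)) : {e | A e} -> R :=
  fun e => if val e \in arcs then 1 else 0.

Definition P_path (R : realFieldType) n p : (arcTD n -> R) -> Prop :=
  in_conv R _ (fun x => exists s, is_0n_path n p s /\
                      forall e, x e = incid R n (arcD n) (path_arcs n s) e).

Definition P_cycle (R : realFieldType) n p : (arcTDn n -> R) -> Prop :=
  in_conv R _ (fun x => exists c, is_p_cycle n (arcDn n) p c /\
                      forall e, x e = incid R n (arcDn n) (cycle_arcs n c) e).

Definition weight (R : realFieldType) n (a : node n -> node n -> R)
    (arcs : seq (node n * node n)) : R :=
  \sum_(e <- arcs) a e.1 e.2.

(* Main.v *)
Require Import Defs.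
From mathcomp Require Import all_boot all_order all_algebra zify ring lra.
Import Order.TTheory GRing.Theory Num.Theory.
Local Open Scope ring_scope.

Section Lin.
Variables (R : realFieldType) (T : finType).
Local Notation V := {ffun option T -> R^o}.

Definition hat (x : T -> R) : V := [ffun o => if o is Some e then x e else 1].

Lemma hat_sumE (m : nat) (lam : nat -> R) (f : nat -> T -> R) o :
  (\sum_(i < m) lam i *: hat (f i)) o =
  \sum_(i < m) lam i * (if o is Some e then f i e else 1).
Proof. by rewrite sum_ffunE; apply: eq_bigr => i _; rewrite !ffunE. Qed.

Lemma free_nat (X : seq V) : free X <->
  forall lam : nat -> R, \sum_(i < size X) lam i *: X`_i = 0 ->
    forall i, (i < size X)%N -> lam i = 0.
Proof.
split.
  move=> /(@vector.freeP _ _ _ (in_tuple X)) H lam Hl i Hi.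
  exact: (H (fun j : 'I_(size X) => lam j) Hl (Ordinal Hi)).
move=> H; apply/(@vector.freeP _ _ _ (in_tuple X)) => k Hk i.
pose lam j := if insub j is Some i' then k i' else 0.
have lamE (j : 'I_(size X)) : lam j = k j by rewrite /lam valK.
have := H lam; rewrite -lamE; apply => //.
by rewrite -[RHS]Hk; apply: eq_bigr => j _; rewrite lamE.
Qed.

Lemma aff_indep_free (ps : seq (T -> R)) :
  aff_indep R T ps <-> free (map hat ps).
Proof.
have E (lam : nat -> R) : \sum_(i < size (map hat ps)) lam i *: (map hat ps)`_i =
             \sum_(i < size ps) lam i *: hat (nth (fun _ => 0) ps i).
  rewrite size_map.
  by apply: eq_bigr => i _; rewrite (nth_map (fun _ => 0)).
split.
  move=> H; apply/free_nat => lam; rewrite E size_map => /ffunP Hl; apply: H.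
    by have := Hl None; rewrite hat_sumE ffunE; under eq_bigr do rewrite mulr1.
  by move=> e; have := Hl (Some e); rewrite hat_sumE ffunE.
move=> /free_nat H lam H1 H2 i Hi; apply: H; last by rewrite size_map.
rewrite E; apply/ffunP => o.
rewrite hat_sumE ffunE; case: o => [e|]; first by rewrite H2.
by under eq_bigr do rewrite mulr1.
Qed.

Definition lf (c : option T -> R) (v : V) : R := \sum_o c o * v o.

Lemma lf_span (X : seq V) c v : v \in <<X>>%VS ->
  (forall x, x \in X -> lf c x = 0) -> lf c v = 0.
Proof.
move=> /(@coord_span _ _ _ (in_tuple X)) -> H.
rewrite /lf.
under eq_bigr do rewrite sum_ffunE mulr_sumr.
rewrite exchange_big /= big1 // => i _.
have Hi : X`_i \in X by apply: mem_nth.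
have := H _ Hi; rewrite /lf => H0.
under eq_bigr do rewrite ffunE /= mulrCA.
by rewrite -mulr_sumr H0 mulr0.
Qed.

Lemma free_sub_map (A : eqType) (h : A -> V) (X : seq A) :
  exists Y, {subset Y <= X} /\ free (map h Y) /\ <<map h Y>>%VS = <<map h X>>%VS.
Proof.
elim: X => [|x X [Y [HY1 [HY2 HY3]]]]; first by exists [::]; split=> //; split=> //; rewrite /free span_nil dimv0.
case Hx: (h x \in <<map h Y>>%VS).
  exists Y; split; first by move=> y /HY1 Hy; rewrite inE Hy orbT.
  split=> //=; rewrite span_cons -HY3; apply/eqP; rewrite eqEsubv addvSr.
  by rewrite subv_add subvv andbT -memvE.
exists (x :: Y); split.
  by move=> y; rewrite !inE => /orP[->//|/HY1->]; rewrite orbT.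
by rewrite /= free_cons Hx HY2 !span_cons HY3.
Qed.

End Lin.

Set Implicit Arguments.
Unset Strict Implicit.
Section Comb.
Variable n : nat.
Hypothesis n0 : (0 < n)%N.
Local Notation N := (node n).
Local Notation o0 := (@ord0 n).
Local Notation om := (@ord_max n).

Lemma om_neq0 : (om == o0) = false.
Proof. by apply/negbTE; rewrite -val_eqE /= -lt0n. Qed.
Lemma o0_neqm : (o0 == om) = false.
Proof. by rewrite eq_sym om_neq0. Qed.

Definition sw (x : N) : N := if x == o0 then om else if x == om then o0 else x.
Lemma sw0 : sw o0 = om. Proof. by rewrite /sw eqxx. Qed.
Lemma swm : sw om = o0. Proof. by rewrite /sw om_neq0 eqxx. Qed.
Lemma swK : involutive sw.
Proof.
move=> x; case: (eqVneq x o0) => [->|H0]; first by rewrite sw0 swm.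
case: (eqVneq x om) => [->|Hm]; first by rewrite swm sw0.
by rewrite /sw (negbTE H0) (negbTE Hm) (negbTE H0) (negbTE Hm).
Qed.
Definition swp (a : N * N) : N * N := (sw a.1, a.2).
Lemma swpK : involutive swp.
Proof. by case=> x y; rewrite /swp /= swK. Qed.
Lemma swp_inj : injective swp.
Proof. exact: inv_inj swpK. Qed.

Lemma arcD_swp a : arcD n (swp a) = arcDn n a.
Proof.
case: a => i j; rewrite /arcD /arcDn /swp /sw /=.
case: (eqVneq i o0) => [->|H0].
  by rewrite eqxx /= !andbF.
case: (eqVneq i om) => [->|Hm].
  by rewrite o0_neqm xpair_eqE eqxx /= (eq_sym o0 j) (eq_sym om j); case: (j == o0); case: (j == om).
by rewrite (negbTE Hm) xpair_eqE (negbTE H0) /= !andbT.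
Qed.
Lemma arcDn_swp a : arcDn n (swp a) = arcD n a.
Proof. by rewrite -{2}(swpK a) arcD_swp. Qed.

Definition phi2 (e : arcTDn n) : arcTD n :=
  @exist _ (arcD n) (swp (val e)) (etrans (arcD_swp _) (valP e)).
Definition phi1 (e : arcTD n) : arcTDn n :=
  @exist _ (arcDn n) (swp (val e)) (etrans (arcDn_swp _) (valP e)).
Lemma phi12 e : phi1 (phi2 e) = e.
Proof. by apply: val_inj; rewrite /= swpK. Qed.
Lemma phi21 e : phi2 (phi1 e) = e.
Proof. by apply: val_inj; rewrite /= swpK. Qed.

Definition Phi {R : Type} (x : arcTD n -> R) : arcTDn n -> R := fun e => x (phi2 e).

Definition cyc (t : seq N) := om :: t.
Definition pth (t : seq N) := o0 :: rcons t om.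

Lemma cycle_arcs_cons x s : cycle_arcs n (x :: s) = zip (x :: s) (rcons s x).
Proof. by rewrite /cycle_arcs rot1_cons. Qed.

Lemma map_swp_zip (s u : seq N) : map swp (zip s u) = zip (map sw s) u.
Proof. by elim: s u => [|x s IH] [|y u] //=; rewrite IH. Qed.

Lemma zip_rcons_l (T1 T2 : Type) (s : seq T1) (u : seq T2) x :
  size s = size u -> zip (rcons s x) u = zip s u.
Proof. by move=> H; rewrite -cats1 -[u]cats0 zip_cat // !cats0. Qed.

Lemma sw_id x : x != o0 -> x != om -> sw x = x.
Proof. by move=> H0 Hm; rewrite /sw (negbTE H0) (negbTE Hm). Qed.

Lemma pth_arcs t : o0 \notin t -> om \notin t ->
  path_arcs n (pth t) = map swp (cycle_arcs n (cyc t)).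
Proof.
move=> H0 Hm; rewrite /path_arcs /pth /cyc /= cycle_arcs_cons map_swp_zip /=.
have -> : map sw t = t.
  rewrite -[RHS]map_id; apply/eq_in_map => x Hx; apply: sw_id.
    by apply: contraNneq H0 => <-.
  by apply: contraNneq Hm => <-.
have -> : sw om = o0 by rewrite /sw om_neq0 eqxx.
by rewrite -rcons_cons zip_rcons_l // size_rcons.
Qed.

Lemma incid_pth (R : realFieldType) t (e : arcTDn n) : o0 \notin t -> om \notin t ->
  Phi (incid R n (arcD n) (path_arcs n (pth t))) e =
  incid R n (arcDn n) (cycle_arcs n (cyc t)) e.
Proof.
by move=> H0 Hm; rewrite /Phi /incid /phi2 /= pth_arcs // (mem_map swp_inj).
Qed.

Lemma path_decomp p s : is_0n_path n p s ->
  exists t, [/\ s = pth t, o0 \notin t & om \notin t].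
Proof.
case/and5P=> Hs Hu Hh Hl Ha.
case: s Hs Hu Hh Hl Ha => [|x s'] //= Hs Hu /eqP Hh Hl Ha; subst x.
case/lastP: s' Hs Hu Hl Ha => [|t y] Hs Hu Hl Ha.
  by move: Hl; rewrite /= o0_neqm.
move: Hl; rewrite last_rcons => /eqP Hy; subst y.
exists t; split => //.
  by move: Hu => /andP[]; rewrite mem_rcons inE negb_or => /andP[].
by move: Hu => /andP[_]; rewrite rcons_uniq => /andP[].
Qed.

Lemma unzip1_cycle_arcs (c : seq N) : unzip1 (cycle_arcs n c) = c.
Proof. by rewrite unzip1_zip // size_rot. Qed.
Lemma unzip2_cycle_arcs (c : seq N) : unzip2 (cycle_arcs n c) = rot 1 c.
Proof. by rewrite unzip2_zip // size_rot. Qed.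

Lemma mem_cycle_src (c : seq N) x : x \in c -> exists2 a, a \in cycle_arcs n c & a.1 = x.
Proof. by rewrite -{1}(unzip1_cycle_arcs c) => /mapP[a Ha ->]; exists a. Qed.
Lemma mem_cycle_tgt (c : seq N) x : x \in c -> exists2 a, a \in cycle_arcs n c & a.2 = x.
Proof.
by rewrite -(mem_rot 1) -{1}(unzip2_cycle_arcs c) => /mapP[a Ha ->]; exists a.
Qed.

Lemma cycle_arcs_uniq (c : seq N) : uniq c -> uniq (cycle_arcs n c).
Proof. by rewrite -{1}(unzip1_cycle_arcs c); apply: map_uniq. Qed.

Lemma cycleDn_no0 (c : seq N) : all (arcDn n) (cycle_arcs n c) -> o0 \notin c.
Proof.
move=> /allP H; apply/negP => /mem_cycle_src[a /H].
by case/and3P=> _ H1 _ E; move: H1; rewrite E eqxx.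
Qed.

Lemma cycleD_nodes (c : seq N) : all (arcD n) (cycle_arcs n c) -> o0 \notin c /\ om \notin c.
Proof.
move=> /allP H; split; apply/negP.
  by move=> /mem_cycle_tgt[a /H]; case/and4P=> _ H1 _ _ E; move: H1; rewrite E eqxx.
by move=> /mem_cycle_src[a /H]; case/and4P=> _ _ H1 _ E; move: H1; rewrite E eqxx.
Qed.

Lemma cycleD_Dn p (c : seq N) : is_p_cycle n (arcD n) p c -> is_p_cycle n (arcDn n) p c.
Proof.
case/and3P=> Hs Hu Ha; rewrite /is_p_cycle Hs Hu /=.
have [H0 _] := @cycleD_nodes c Ha.
apply/allP => a Ha'; move/allP: Ha => /(_ a Ha'); case/and4P=> H1 H2 _ _.
rewrite /arcDn H1 H2 andbT /=.
have : a.1 \in c by rewrite -(unzip1_cycle_arcs c); apply: map_f.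
by apply: contraTneq => ->.
Qed.

Lemma pth_cyc p t : o0 \notin t -> om \notin t ->
  is_0n_path n p (pth t) -> is_p_cycle n (arcDn n) p (cyc t).
Proof.
move=> H0 Hm; case/and5P=> Hs Hu _ _ Ha.
rewrite /is_p_cycle /cyc /=; apply/and3P; split.
- by move: Hs; rewrite /pth /= size_rcons.
- by rewrite Hm; move: Hu => /= /andP[_]; rewrite rcons_uniq => /andP[].
- by move: Ha; rewrite pth_arcs // all_map; apply: sub_all => a; rewrite /= arcD_swp.
Qed.

Lemma cyc_pth p t : is_p_cycle n (arcDn n) p (cyc t) ->
  [/\ is_0n_path n p (pth t), o0 \notin t & om \notin t].
Proof.
move=> H; have H0 : o0 \notin cyc t by apply: cycleDn_no0; case/and3P: H.
move: H0; rewrite /cyc inE negb_or => /andP[_ H0].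
case/and3P: H => Hs Hu Ha; move: Hu => /= /andP[Hm Hu].
split=> //; apply/and5P; split.
- by move: Hs; rewrite /pth /= size_rcons.
- by rewrite /pth /= mem_rcons inE negb_or o0_neqm H0 rcons_uniq Hm Hu.
- by [].
- by rewrite /pth /= last_rcons.
- by rewrite pth_arcs // all_map; apply: sub_all Ha => a; rewrite /= arcD_swp.
Qed.

Lemma cycle_arcs_rot1 (c : seq N) : cycle_arcs n (rot 1 c) = rot 1 (cycle_arcs n c).
Proof.
case: c => [|x [|y s]] //.
rewrite rot1_cons rcons_cons cycle_arcs_cons [in RHS]cycle_arcs_cons rcons_cons.
rewrite [zip (x :: _) _]/= rot1_cons -rcons_cons zip_rcons //.
by rewrite /= size_rcons.
Qed.

Lemma mem_cycle_arcs_rot k (c : seq N) : cycle_arcs n (rot k c) =i cycle_arcs n c.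
Proof.
elim: k => [|k IH]; first by rewrite rot0.
case: (ltnP k (size c)) => Hk.
  by move=> a; rewrite (rotS Hk) cycle_arcs_rot1 mem_rot IH.
by rewrite rot_oversize // ltnW.
Qed.

Lemma cycle_rot A p k (c : seq N) : is_p_cycle n A p c -> is_p_cycle n A p (rot k c).
Proof.
case/and3P=> Hs Hu Ha; rewrite /is_p_cycle size_rot Hs rot_uniq Hu /=.
by apply/allP => a; rewrite mem_cycle_arcs_rot => /(allP Ha).
Qed.

Lemma cycle_with_om p (c : seq N) : is_p_cycle n (arcDn n) p c -> om \in c ->
  exists t, is_p_cycle n (arcDn n) p (cyc t) /\ cycle_arcs n (cyc t) =i cycle_arcs n c.
Proof.
move=> H Hm; have := rot_index Hm => /= E.
exists (drop (index om c).+1 c ++ take (index om c) c); rewrite /cyc -E; split.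
  exact: cycle_rot.
exact: mem_cycle_arcs_rot.
Qed.


Local Close Scope ring_scope.


Lemma count_sum (T : Type) (P : pred T) (s : seq T) : count P s = \sum_(x <- s) (P x : nat).
Proof. by elim: s => [|x s IH]; rewrite ?big_nil ?big_cons //= IH. Qed.

Lemma zip_map2 (A B : Type) (f : A -> B) (s t : seq A) :
  zip (map f s) (map f t) = map (fun a => (f a.1, f a.2)) (zip s t).
Proof. by elim: s t => [|x s IH] [|y t] //=; rewrite IH. Qed.

Lemma cycle_arcs_map (f : N -> N) c :
  cycle_arcs n (map f c) = map (fun a => (f a.1, f a.2)) (cycle_arcs n c).
Proof. by rewrite /cycle_arcs -map_rot zip_map2. Qed.

Lemma cycle_arcs_neq (c : seq N) a : uniq c -> (1 < size c)%N ->
  a \in cycle_arcs n c -> a.1 != a.2.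
Proof.
move=> Hu Hs /(nthP (o0, o0)) [i Hi <-].
rewrite /cycle_arcs size_zip size_rot minnn in Hi.
rewrite /cycle_arcs nth_zip ?size_rot //=.
case: c Hu Hs Hi => [//|x s] Hu Hs Hi.
rewrite rot1_cons.
have E : nth o0 (rcons s x) i = nth o0 (x :: s) (if (i < size s)%N then i.+1 else 0).
  rewrite nth_rcons; case: ifP => //= Hi'.
  have -> : i = size s by move: Hi; rewrite /= ltnS leq_eqVlt Hi' orbF => /eqP.
  by rewrite eqxx.
rewrite E nth_uniq //; last by case: ifP.
case: ifP => Hi'; first by rewrite neq_ltn ltnSn.
move: Hi Hs => /=; rewrite ltnS => Hi Hs.
by move/negbT: Hi'; rewrite -leqNgt => Hi'; apply/eqP => Hi0; move: Hi' Hs; rewrite Hi0 ltnS; case: (size s).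
Qed.

Lemma mem_arc1 (c : seq N) a : a \in cycle_arcs n c -> a.1 \in c.
Proof.
by move=> Ha; rewrite -(unzip1_zip (s:=c) (t:=rot 1 c)) ?size_rot //; apply: map_f.
Qed.
Lemma mem_arc2 (c : seq N) a : a \in cycle_arcs n c -> a.2 \in c.
Proof.
move=> Ha; rewrite -(mem_rot 1) -(unzip2_zip (s:=c) (t:=rot 1 c)) ?size_rot //.
exact: map_f.
Qed.

Lemma cycle_arcsDn (c : seq N) : uniq c -> (1 < size c)%N -> o0 \notin c ->
  all (arcDn n) (cycle_arcs n c).
Proof.
move=> Hu Hs H0; apply/allP => a Ha.
rewrite /arcDn (@cycle_arcs_neq c a Hu Hs Ha) /=.
apply/andP; split.
  by apply: contraNneq H0 => <-; apply: mem_arc1 Ha.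
by apply: contraNneq H0 => <-; apply: mem_arc2 Ha.
Qed.

Definition rep (x : N) : N -> N := fun y => if y == x then om else y.


Lemma count_pair1 (C : seq N) (e : N * N) :
  count (fun y => (om, y) == e) C = (e.1 == om) * count_mem e.2 C.
Proof.
case: e => i j /=; rewrite (eq_sym i).
case: (eqVneq om i) => [<-|H] /=.
  by rewrite mul1n; apply: eq_count => y; rewrite xpair_eqE eqxx.
by rewrite mul0n; apply/eqP; rewrite -leqn0 leqNgt -has_count; apply/hasP => -[y _]; rewrite xpair_eqE (negbTE H).
Qed.

Lemma count_pair2 (C : seq N) (e : N * N) :
  count (fun y => (y, om) == e) C = (e.2 == om) * count_mem e.1 C.
Proof.
case: e => i j /=; rewrite (eq_sym j).
case: (eqVneq om j) => [<-|H] /=.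
  by rewrite mul1n; apply: eq_count => y; rewrite xpair_eqE eqxx andbT.
by rewrite mul0n; apply/eqP; rewrite -leqn0 leqNgt -has_count; apply/hasP => -[y _]; rewrite xpair_eqE (negbTE H) andbF.
Qed.

Lemma count_arc1 (Q : pred N) (C : seq N) :
  count (fun x => Q x.1) (cycle_arcs n C) = count Q C.
Proof. by rewrite -[in RHS](unzip1_zip (s:=C) (t:=rot 1 C)) ?size_rot // count_map. Qed.

Lemma count_arc2 (Q : pred N) (C : seq N) :
  count (fun x => Q x.2) (cycle_arcs n C) = count Q C.
Proof.
have HP : perm_eq (rot 1 C) C by rewrite (perm_rot 1 C) perm_refl.
rewrite -[in RHS](permP HP).
by rewrite -[in RHS](unzip2_zip (s:=C) (t:=rot 1 C)) ?size_rot // count_map.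
Qed.

Lemma sigma_count (C : seq N) (e : N * N) : uniq C -> om \notin C -> (1 < size C)%N ->
  \sum_(x <- C) count_mem e (cycle_arcs n (map (rep x) C)) =
  (size C).-2 * count_mem e (cycle_arcs n C) + (e.1 == om) * count_mem e.2 C
  + (e.2 == om) * count_mem e.1 C.
Proof.
move=> Hu Hm Hs.
under eq_bigr do rewrite cycle_arcs_map count_map count_sum.
rewrite exchange_big /=.
have key a : a \in cycle_arcs n C ->
  \sum_(x <- C) ((rep x a.1, rep x a.2) == e : nat) =
  (size C).-2 * (a == e) + ((om, a.2) == e) + ((a.1, om) == e).
  move=> Ha; have Hne := @cycle_arcs_neq C a Hu Hs Ha.
  have H1 := @mem_arc1 C a Ha; have H2 := @mem_arc2 C a Ha.
  case: a Ha Hne H1 H2 => a1 a2 /= Ha Hne H1 H2.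
  have E x : ((rep x a1, rep x a2) == e : nat) =
     (x == a1) * ((om, a2) == e) + (x == a2) * ((a1, om) == e)
     + ((x != a1) && (x != a2)) * ((a1, a2) == e).
    rewrite /rep; case: (eqVneq a1 x) => [<-|H1x].
      by rewrite (eq_sym a2) (negbTE Hne) /= !mul0n !addn0 mul1n.
    case: (eqVneq a2 x) => [E2|H2x].
      by case: ((a1, om) == e); case: ((a1, a2) == e); case: ((om, a2) == e).
    by case: ((a1, a2) == e).
  under eq_bigr do rewrite E.
  rewrite !big_split /= -!big_distrl /= -!count_sum.
  have c1 : count (fun x => x == a1) C = 1.
    by have := count_uniq_mem a1 Hu; rewrite H1.
  have c2 : count (fun x => x == a2) C = 1.
    by have := count_uniq_mem a2 Hu; rewrite H2.
  have c3 : count (fun x => (x != a1) && (x != a2)) C = (size C).-2.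
    have := count_predC (predU (pred1 a1) (pred1 a2)) C.
    have := count_predUI (pred1 a1) (pred1 a2) C.
    have -> : count (predI (pred1 a1) (pred1 a2)) C = 0.
      apply/eqP; rewrite -leqn0 leqNgt -has_count; apply/hasP => -[y _] /andP[/eqP -> /eqP E2].
      by rewrite E2 eqxx in Hne.
    rewrite c1 c2 addn0 => ->.
    rewrite (@eq_count _ _ (fun x => (x != a1) && (x != a2))); last first.
      by move=> x /=; rewrite negb_or.
    by move=> <-; rewrite add1n addSn add1n /=.
  by rewrite c1 c2 c3 !mul1n mulnC addnC addnA.
rewrite (eq_big_seq _ key) !big_split /= -big_distrr /= -!count_sum.
rewrite (count_arc2 (fun y => (om, y) == e)) (count_arc1 (fun y => (y, om) == e)).
by rewrite count_pair1 count_pair2.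
Qed.

Lemma zip_rcons_l3 (T1 T2 : Type) (s : seq T1) (u : seq T2) x :
  size s = size u -> zip (rcons s x) u = zip s u.
Proof. by move=> H; rewrite -cats1 -[u]cats0 zip_cat // !cats0. Qed.

Lemma cycle_arcs_pa x s : cycle_arcs n (x :: s) = path_arcs n (x :: rcons s x).
Proof.
rewrite /cycle_arcs /path_arcs rot1_cons [behead _]/= -rcons_cons.
by rewrite zip_rcons_l3 //= size_rcons.
Qed.

Lemma pa_rcons (y : N) u z :
  path_arcs n (rcons (y :: u) z) = rcons (path_arcs n (y :: u)) (last y u, z).
Proof.
elim: u y => [|y' u IH] y //=.
by have := IH y'; rewrite /path_arcs /= => ->.
Qed.

Lemma count_rcons (T : eqType) (e : T) s x :
  count_mem e (rcons s x) = count_mem e s + (x == e).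
Proof. by rewrite -cats1 count_cat /= addn0. Qed.

Lemma cycle_arcs_cons2 x s :
  cycle_arcs n (x :: s) = rcons (path_arcs n (x :: s)) (last x s, x).
Proof. by rewrite cycle_arcs_pa -rcons_cons pa_rcons. Qed.

Lemma pa_rcons2 u (y z : N) :
  path_arcs n (rcons (rcons u y) z) = rcons (path_arcs n (rcons u y)) (y, z).
Proof. by case: u => [|a u] //; rewrite rcons_cons pa_rcons last_rcons. Qed.

Lemma star_count (s1 s2 : N) S2 v w (e : N * N) :
  let S := s1 :: s2 :: S2 in
  let A x := om :: x :: S in
  let B x := om :: rcons S x in
  let M x := om :: rcons (rcons (s2 :: S2) x) s1 in
  count_mem e (cycle_arcs n (A v)) + count_mem e (cycle_arcs n (B v))
  + count_mem e (cycle_arcs n (M w)) + ((om, w) == e) + ((w, om) == e) =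
  count_mem e (cycle_arcs n (A w)) + count_mem e (cycle_arcs n (B w))
  + count_mem e (cycle_arcs n (M v)) + ((om, v) == e) + ((v, om) == e).
Proof.
move=> S A B M.
have EA x : count_mem e (cycle_arcs n (A x)) =
   count_mem e (path_arcs n (om :: x :: S)) + ((last s2 S2, om) == e).
  by rewrite /A cycle_arcs_cons2 count_rcons.
have EB x : count_mem e (cycle_arcs n (B x)) =
   count_mem e (path_arcs n (om :: S)) + ((last s2 S2, x) == e) + ((x, om) == e).
  rewrite /B cycle_arcs_cons2 count_rcons -rcons_cons pa_rcons count_rcons.
  by rewrite last_rcons.
have EM x : count_mem e (cycle_arcs n (M x)) =
   count_mem e (path_arcs n (om :: s2 :: S2)) + ((last s2 S2, x) == e)
   + ((x, s1) == e) + ((s1, om) == e).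
  rewrite /M cycle_arcs_cons2 count_rcons -rcons_cons -rcons_cons pa_rcons2 count_rcons pa_rcons count_rcons !last_rcons /=.
  by [].
rewrite !EA !EB !EM.
have E1 x : count_mem e (path_arcs n (om :: x :: S)) =
  ((om, x) == e) + ((x, s1) == e) + count_mem e (path_arcs n S) by rewrite /= addnA.
rewrite !E1.
lia.
Qed.


Local Open Scope ring_scope.
Variable R : realFieldType.
Variable p : nat.
Hypothesis Hp4 : (4 <= p)%N.
Hypothesis Hpn : (p < n)%N.

Local Notation T2 := (arcTDn n).
Local Notation T1 := (arcTD n).
Local Notation V2 := {ffun option T2 -> R^o}.
Local Notation hat2 := (hat R T2).

Definition chi (c : seq N) : T2 -> R := incid R n (arcDn n) (cycle_arcs n c).
Definition vpath (s : seq N) : T1 -> R := incid R n (arcD n) (path_arcs n s).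
Definition hv (s : seq N) : V2 := hat2 (Phi (vpath s)).
Definition allpaths : seq (seq N) :=
  [seq s <- map val (enum {: p.+1.-tuple N}) | is_0n_path n p s].
Definition U : {vspace V2} := <<map hv allpaths>>%VS.

Lemma allpathsP s : is_0n_path n p s -> s \in allpaths.
Proof.
move=> H; rewrite mem_filter H /=.
have Hs : size s == p.+1 by case/and5P: H.
by apply/mapP; exists (Tuple Hs); rewrite ?mem_enum.
Qed.

Lemma hat_eq (T : finType) (x y : T -> R) : (forall e, x e = y e) -> hat R T x = hat R T y.
Proof. by move=> H; apply/ffunP => -[e|]; rewrite !ffunE ?H. Qed.

Lemma U_gen c : is_p_cycle n (arcDn n) p c -> om \in c -> hat2 (chi c) \in U.
Proof.
move=> Hc Hm; have [t [Ht Hmem]] := cycle_with_om Hc Hm.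
have [Hp H0 Hm'] := cyc_pth Ht.
have -> : hat2 (chi c) = hv (pth t).
  by apply: hat_eq => e; rewrite /vpath incid_pth // /chi /incid Hmem.
by apply: memv_span; apply: map_f; apply: allpathsP.
Qed.

Lemma chi_count c e : uniq c -> chi c e = (count_mem (val e) (cycle_arcs n c))%:R.
Proof.
move=> Hu; rewrite /chi /incid count_uniq_mem ?cycle_arcs_uniq //.
by case: (_ \in _).
Qed.

Definition ST (x : N) : V2 :=
  [ffun o => if o is Some e then (((om, x) == val e) + ((x, om) == val e))%:R else 0].
Definition eN : V2 := [ffun o => if o is Some _ then 0 else 1].

Lemma mkcycle c : size c = p -> uniq c -> o0 \notin c -> is_p_cycle n (arcDn n) p c.
Proof.
move=> Hs Hu H0; rewrite /is_p_cycle Hs eqxx Hu /=.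
by apply: cycle_arcsDn => //; rewrite Hs; apply: leq_trans Hp4.
Qed.

Lemma rep_cycle C x : is_p_cycle n (arcDn n) p C -> om \notin C -> x \in C ->
  is_p_cycle n (arcDn n) p (map (rep x) C) /\ om \in map (rep x) C.
Proof.
move=> HC Hm Hx; have H0 : o0 \notin C by apply: cycleDn_no0; case/and3P: HC.
case/and3P: HC => /eqP Hs Hu _.
split; last by apply/mapP; exists x; rewrite // /rep eqxx.
apply: mkcycle; first by rewrite size_map.
  rewrite map_inj_in_uniq // => y z Hy Hz; rewrite /rep.
  case: (eqVneq y x) => [->|Hyx]; case: (eqVneq z x) => [->|Hzx] //.
    by move=> E; move: Hm; rewrite ?E ?Hz ?Hy // -?E ?Hz ?Hy.
  by move=> E; move: Hm; rewrite -?E ?Hz ?Hy // ?E ?Hz ?Hy.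
apply/mapP => -[y Hy]; rewrite /rep; case: (eqVneq y x) => _.
  by move/eqP; rewrite o0_neqm.
by move=> E; rewrite E Hy in H0.
Qed.

Lemma sc (a b : R) : a *: (b : R^o) = a * b. Proof. by []. Qed.

Lemma sigma_vec C : is_p_cycle n (arcDn n) p C -> om \notin C ->
  \sum_(x <- C) hat2 (chi (map (rep x) C)) =
  (p.-2)%:R *: hat2 (chi C) + \sum_(x <- C) ST x + 2%:R *: eN.
Proof.
move=> HC Hm.
have Hrep x : x \in C -> uniq (map (rep x) C).
  by move=> Hx; have [/and3P[_ ? _] _] := rep_cycle HC Hm Hx.
case/and3P: (HC) => /eqP Hs Hu _.
apply/ffunP => -[e|]; rewrite !ffunE !sum_ffunE /=.
  rewrite (eq_big_seq (fun x => (count_mem (val e) (cycle_arcs n (map (rep x) C)))%:R)); last first.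
    by move=> x Hx; rewrite ffunE chi_count ?Hrep.
  rewrite /ST; under [in RHS]eq_bigr do rewrite ffunE.
  rewrite -!natr_sum sigma_count // ?Hs; last by apply: leq_trans Hp4.
  rewrite scaler0 addr0 chi_count // sc.
  have -> : \sum_(x <- C) (((om, x) == val e) + ((x, om) == val e))%N =
     (((val e).1 == om) * count_mem (val e).2 C + ((val e).2 == om) * count_mem (val e).1 C)%N.
    by rewrite big_split /= -!count_sum count_pair1 count_pair2.
  by rewrite -natrM -!natrD addnA.
rewrite /ST; under [in RHS]eq_bigr do rewrite ffunE.
under eq_bigr do rewrite ffunE.
rewrite [X in _ + X + _]big1 // addr0 !sc !mulr1 (big_nth o0) big_mkord sumr_const card_ord Hs.
by rewrite -natrD; congr (_%:R); lia.
Qed.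

Lemma exists_S v w : exists s1 s2 S2,
  [/\ size (s1 :: s2 :: S2) = p.-2, uniq (s1 :: s2 :: S2),
      om \notin s1 :: s2 :: S2, o0 \notin s1 :: s2 :: S2
    & v \notin s1 :: s2 :: S2 /\ w \notin s1 :: s2 :: S2].
Proof.
pose P := [pred x : N | [&& x != o0, x != om, x != v & x != w]].
have Hcard : (p.-2 <= #|P|)%N.
  have H1 := cardC P; rewrite card_ord in H1.
  have H2 : (#|[predC P]| <= 4)%N.
    apply: leq_trans (card_size [:: o0; om; v; w]).
    apply: subset_leq_card; apply/subsetP => x.
    by rewrite !inE /= !negb_and !negbK.
  have Hx : (p.-2 <= n - 3)%N by lia.
  apply: (@leq_trans (n - 3)) => //; have := leq_add (leqnn #|P|) H2; rewrite H1 => H4.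
  clear -H4; lia.

pose S := take p.-2 (enum P).
have HsS : size S = p.-2.
  rewrite size_take -cardE; case: ifP => // /negbT; rewrite -leqNgt => H.
  by apply/eqP; rewrite eqn_leq H Hcard.
have HP x : x \in S -> P x by move/mem_take; rewrite mem_enum.
have HuS : uniq S by apply: take_uniq; apply: enum_uniq.
have H2 : (2 <= size S)%N by rewrite HsS; lia.
case ES: S HsS HP HuS H2 => [|s1 [|s2 S2]] // HsS HP HuS _.
exists s1, s2, S2; split => //.
- by apply/negP => /HP /and4P[_ /eqP H _ _]; apply: H.
- by apply/negP => /HP /and4P[/eqP H _ _ _]; apply: H.
- by split; apply/negP => /HP /and4P[_ _ /eqP H1 /eqP H2]; [apply: H1 | apply: H2].
Qed.

Lemma count_rconsP (T : Type) (q : pred T) s x : count q (rcons s x) = (count q s + q x)%N.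
Proof. by rewrite -cats1 count_cat /= addn0. Qed.

Lemma star_cyc (s1 s2 : N) S2 x :
  size (s1 :: s2 :: S2) = p.-2 -> uniq (s1 :: s2 :: S2) ->
  om \notin s1 :: s2 :: S2 -> o0 \notin s1 :: s2 :: S2 -> x \notin s1 :: s2 :: S2 ->
  x != om -> x != o0 ->
  [/\ is_p_cycle n (arcDn n) p (om :: x :: s1 :: s2 :: S2),
      is_p_cycle n (arcDn n) p (om :: rcons (s1 :: s2 :: S2) x)
    & is_p_cycle n (arcDn n) p (om :: rcons (rcons (s2 :: S2) x) s1)].
Proof.
move=> Hs Hu Hm H0 Hx Hxm Hx0.
have HA : is_p_cycle n (arcDn n) p (om :: x :: s1 :: s2 :: S2).
  apply: mkcycle.
  - by move: Hs => /= ->; lia.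
  - move: Hu; rewrite [uniq _]/= /= => /and3P[-> -> ->]; rewrite Hx !andbT.
    by rewrite in_cons negb_or eq_sym Hxm Hm.
  - by rewrite !inE negb_or eq_sym om_neq0 negb_or eq_sym Hx0 /=; move: H0; rewrite !inE.
have Hp1 c : perm_eq c (om :: x :: s1 :: s2 :: S2) -> is_p_cycle n (arcDn n) p c.
  move=> Pc; case/and3P: (HA) => /eqP HsA HuA _.
  apply: mkcycle; first by rewrite (perm_size Pc).
    by rewrite (perm_uniq Pc).
  by rewrite (perm_mem Pc); apply: cycleDn_no0; case/and3P: HA.
split=> //; apply: Hp1; apply/permP => q /=; rewrite !count_rconsP /=; lia.
Qed.

Lemma ST_diff v w : v != o0 -> v != om -> w != o0 -> w != om -> ST v - ST w \in U.
Proof.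
move=> Hv0 Hvm Hw0 Hwm.
have [s1 [s2 [S2 [Hs Hu Hm H0 [Hv Hw]]]]] := exists_S v w.
have [Av Bv Mv] := star_cyc Hs Hu Hm H0 Hv Hvm Hv0.
have [Aw Bw Mw] := star_cyc Hs Hu Hm H0 Hw Hwm Hw0.
set A := fun x => om :: x :: s1 :: s2 :: S2.
set B := fun x => om :: rcons (s1 :: s2 :: S2) x.
set M := fun x => om :: rcons (rcons (s2 :: S2) x) s1.
have key : ST v - ST w = hat2 (chi (A v)) + hat2 (chi (B v)) - hat2 (chi (M v))
     - (hat2 (chi (A w)) + hat2 (chi (B w)) - hat2 (chi (M w))).
  apply/ffunP => -[e|]; rewrite !ffunE /=; last by lra.
  have uq c : is_p_cycle n (arcDn n) p c -> uniq c by case/and3P.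
  rewrite !chi_count ?uq //.
  have := @star_count s1 s2 S2 v w (val e); rewrite /= => /(congr1 (fun m => m%:R : R)).
  rewrite !natrD => Hc.
  lra.
rewrite key; apply: memvB; apply: memvB; rewrite ?memvD //; apply: U_gen => //;
  exact: mem_head.
Qed.

Lemma vec_id (a b c d e : V2) (k : R) :
  k *: (a - b) = (k *: a + c + e - (k *: b + d + e)) - (c - d).
Proof.
apply/ffunP => o; rewrite !ffunE !sc; ring.
Qed.

Lemma internal_U C C0 :
  is_p_cycle n (arcDn n) p C -> om \notin C ->
  is_p_cycle n (arcDn n) p C0 -> om \notin C0 ->
  (p.-2)%:R *: (hat2 (chi C) - hat2 (chi C0)) \in U.
Proof.
move=> HC HmC HC0 HmC0.
rewrite (vec_id _ _ (\sum_(x <- C) ST x) (\sum_(x <- C0) ST x) (2%:R *: eN)).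
rewrite -sigma_vec // -sigma_vec //.
have Hrep D : is_p_cycle n (arcDn n) p D -> om \notin D ->
    \sum_(x <- D) hat2 (chi (map (rep x) D)) \in U.
  move=> HD HmD; rewrite big_seq; apply: memv_suml => x Hx.
  by have [H1 H2] := rep_cycle HD HmD Hx; apply: U_gen.
apply: memvB; first by apply: memvB; apply: Hrep.
case/and3P: (HC) => /eqP HsC _ HaC; case/and3P: (HC0) => /eqP HsC0 _ HaC0.
have H0C := cycleDn_no0 HaC; have H0C0 := cycleDn_no0 HaC0.
rewrite !(big_nth o0) HsC HsC0 -sumrB big_mkord; apply: memv_suml => i _.
have Hi : (i < p)%N by [].
apply: ST_diff.
- by apply: contraNneq H0C => <-; apply: mem_nth; rewrite HsC.
- by apply: contraNneq HmC => <-; apply: mem_nth; rewrite HsC.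
- by apply: contraNneq H0C0 => <-; apply: mem_nth; rewrite HsC0.
- by apply: contraNneq HmC0 => <-; apply: mem_nth; rewrite HsC0.
Qed.

Lemma internal_W C C0 :
  is_p_cycle n (arcDn n) p C -> om \notin C ->
  is_p_cycle n (arcDn n) p C0 -> om \notin C0 ->
  hat2 (chi C) \in (U + <[hat2 (chi C0)]>)%VS.
Proof.
move=> HC HmC HC0 HmC0.
have Hk : (p.-2)%:R != 0 :> R by rewrite pnatr_eq0; lia.
have -> : hat2 (chi C) = (p.-2)%:R^-1 *: ((p.-2)%:R *: (hat2 (chi C) - hat2 (chi C0)))
                         + hat2 (chi C0).
  by rewrite scalerA mulVf // scale1r subrK.
by apply: memv_add; [apply: memvZ; apply: internal_U | apply: memv_line].
Qed.

Lemma hat_conv (T : finType) (ps : seq (T -> R)) (lam : nat -> R) (x : T -> R) :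
  \sum_(i < size ps) lam i = 1 ->
  (forall e, x e = \sum_(i < size ps) lam i * nth (fun _ => 0) ps i e) ->
  hat R T x = \sum_(i < size ps) lam i *: hat R T (nth (fun _ => 0) ps i).
Proof.
move=> H1 H2; apply/ffunP => -[e|]; rewrite hat_sumE ffunE; first by rewrite H2.
by under [in RHS]eq_bigr do rewrite mulr1; rewrite H1.
Qed.

Lemma Pcycle_W C0 x :
  is_p_cycle n (arcDn n) p C0 -> om \notin C0 -> P_cycle R n p x ->
  hat2 x \in (U + <[hat2 (chi C0)]>)%VS.
Proof.
move=> HC0 HmC0 [ps [lam [Hps [H1 H2]]]].
rewrite (hat_conv H1 H2); apply: memv_suml => i _; apply: memvZ.
have [[c [Hc Hv]] _] := Hps i (ltn_ord i).
have -> : hat2 (nth (fun _ => 0) ps i) = hat2 (chi c) by apply: hat_eq.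
case: (boolP (om \in c)) => Hm.
  by apply: (subvP (addvSl _ _)); apply: U_gen.
exact: internal_W.
Qed.

Lemma aff_indep_Phi (ps : seq (T1 -> R)) :
  aff_indep R T1 ps <-> aff_indep R T2 (map Phi ps).
Proof.
rewrite /aff_indep size_map.
have E (lam : nat -> R) e2 : \sum_(i < size ps) lam i * nth (fun _ => 0) (map Phi ps) i e2 =
   \sum_(i < size ps) lam i * nth (fun _ => 0) ps i (phi2 e2).
  by apply: eq_bigr => i _; rewrite (nth_map (fun _ => 0)).
split => H lam H1 H2 i Hi.
  by apply: H H1 _ i Hi => e1; move: (H2 (phi1 e1)); rewrite E phi21.
apply: H H1 _ i Hi => e2; rewrite E; apply: H2.
Qed.

Lemma dotp_conv (T : finType) (c : T -> R) (ps : seq (T -> R)) (lam : nat -> R) x :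
  (forall e, x e = \sum_(i < size ps) lam i * nth (fun _ => 0) ps i e) ->
  dotp R T c x = \sum_(i < size ps) lam i * dotp R T c (nth (fun _ => 0) ps i).
Proof.
move=> H; rewrite /dotp; under eq_bigr do rewrite H mulr_sumr.
rewrite exchange_big; apply: eq_bigr => i _; rewrite mulr_sumr.
by apply: eq_bigr => e _; rewrite mulrCA.
Qed.

Lemma dotp_ext (T : finType) (c x y : T -> R) :
  (forall e, x e = y e) -> dotp R T c x = dotp R T c y.
Proof. by move=> H; apply: eq_bigr => e _; rewrite H. Qed.

Lemma sum_reindex (G : T2 -> R) : \sum_(e : T2) G e = \sum_(e : T1) G (phi1 e).
Proof.
by apply: reindex; exists phi2 => e _; [apply: phi21 | apply: phi12].
Qed.

Lemma sw_om (i : N) : (sw i == om) = (i == o0).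
Proof. by rewrite -sw0 (can_eq swK). Qed.

Lemma dotp_Phi (b : T2 -> R) (x : T1 -> R) :
  dotp R T2 b (Phi x) = \sum_(e : T1) b (phi1 e) * x e.
Proof. by rewrite /dotp sum_reindex; apply: eq_bigr => e _; rewrite /Phi phi21. Qed.

Lemma sum_incid (A : pred (N * N)) (L : seq (N * N)) (G : N * N -> R) :
  uniq L -> all A L ->
  \sum_(e : {x | A x}) G (val e) * incid R n A L e = \sum_(x <- L) G x.
Proof.
move=> Hu HA.
transitivity (\sum_(e : {x | A x}) (if val e \in L then G (val e) else 0)).
  by apply: eq_bigr => e _; rewrite /incid; case: ifP; rewrite ?mulr1 ?mulr0.
rewrite -(big_sub A (fun x => if x \in L then G x else 0)) -big_mkcondr big_uniq //=.
apply: eq_bigl => x; rewrite andb_idl // => Hx.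
by move/allP: HA => /(_ x Hx).
Qed.

Definition c0 (e : T1) : R := ((val e).1 == o0)%:R.

Lemma out0_path t : is_0n_path n p (pth t) -> o0 \notin t -> om \notin t ->
  dotp R T1 c0 (vpath (pth t)) = 1.
Proof.
move=> Hp H0 Hm; case/and5P: (Hp) => _ Hu _ _ Ha.
have HuL : uniq (path_arcs n (pth t)).
  by rewrite pth_arcs // (map_inj_uniq swp_inj) cycle_arcs_uniq //= Hm; move: Hu => /= /andP[_]; rewrite rcons_uniq => /andP[].
rewrite /dotp /vpath /c0 (sum_incid (fun a => (a.1 == o0)%:R)) //.
rewrite -natr_sum -count_sum pth_arcs // count_map.
rewrite (count_arc1 (fun y => sw y == o0)) /= swm eqxx /=.
have -> : count (fun y => sw y == o0) t = 0%N.
  rewrite -(count_pred0 t); apply: eq_in_count => y Hy /=.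
  have Hy0 : y != o0 by apply: contraNneq H0 => <-.
  have Hym : y != om by apply: contraNneq Hm => <-.
  by rewrite sw_id // (negbTE Hy0).
by [].
Qed.

Variables (a : N -> N -> R) (a0 gamma : R).
Definition afun (e : T1) : R := a (val e).1 (val e).2.
Definition bpair (q : N * N) : R :=
  (if q.1 == om then a o0 q.2 else a q.1 q.2) + (if q.1 == om then gamma - a0 else 0).
Definition bfun (e : T2) : R := bpair (val e).

Lemma bfun_phi1 e : bfun (phi1 e) = afun e + (gamma - a0) * c0 e.
Proof.
rewrite /bfun /bpair /afun /c0 /= sw_om.
case: (eqVneq (val e).1 o0) => [E|H0]; first by rewrite E mulr1.
rewrite sw_id // ?mulr0 ?addr0 //.
by case/and4P: (valP e).
Qed.

Lemma dotp_bPhi x : dotp R T2 bfun (Phi x) = dotp R T1 afun x + (gamma - a0) * dotp R T1 c0 x.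
Proof.
rewrite dotp_Phi /dotp mulr_sumr -big_split; apply: eq_bigr => e _.
by rewrite bfun_phi1 mulrDl mulrA.
Qed.

Lemma cycle_Dn_D c : is_p_cycle n (arcDn n) p c -> om \notin c -> is_p_cycle n (arcD n) p c.
Proof.
case/and3P=> Hs Hu Ha Hm; rewrite /is_p_cycle Hs Hu /=.
apply/allP => q Hq.
have Hq0 : q.1 != o0 by case/and3P: (allP Ha q Hq).
have Hqm : q.1 != om by apply: contraNneq Hm => <-; apply: mem_arc1 Hq.
by have := allP Ha q Hq; rewrite -arcD_swp /swp sw_id //; case: q {Hq Hq0 Hqm}.
Qed.

Lemma dotp_b_internal c : is_p_cycle n (arcDn n) p c -> om \notin c ->
  dotp R T2 bfun (chi c) = weight R n a (cycle_arcs n c).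
Proof.
move=> Hc Hm; case/and3P: (Hc) => _ Hu Ha.
rewrite /dotp /chi /bfun (sum_incid bpair) ?cycle_arcs_uniq //.
apply: eq_big_seq => q Hq; rewrite /bpair.
have -> : (q.1 == om) = false.
  by apply/negbTE; apply: contraNneq Hm => <-; apply: mem_arc1 Hq.
by rewrite addr0.
Qed.

Lemma vertex_in_conv (T : finType) (S : (T -> R) -> Prop) v : S v -> in_conv R T S v.
Proof.
move=> Hv; exists [:: v], (fun _ => 1); split.
  by case=> //= _; split.
split; first by rewrite big_ord1.
by move=> e; rewrite big_ord1 mul1r.
Qed.

Lemma vpath_in s : is_0n_path n p s -> P_path R n p (vpath s).
Proof. by move=> Hs; apply: vertex_in_conv; exists s. Qed.

Lemma Ppath_out0 x : P_path R n p x -> dotp R T1 c0 x = 1.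
Proof.
move=> [ps [lam [Hps [H1 H2]]]]; rewrite (dotp_conv _ H2) -H1.
apply: eq_bigr => i _; have [[s [Hs Hv]] _] := Hps i (ltn_ord i).
have [t [E H0 Hm]] := path_decomp Hs; subst s.
by rewrite (dotp_ext _ Hv) out0_path // mulr1.
Qed.

Hypothesis Hval : forall x, P_path R n p x -> dotp R T1 afun x <= a0.
Hypothesis Hgam : forall c, is_p_cycle n (arcD n) p c -> weight R n a (cycle_arcs n c) <= gamma.

Lemma Pcycle_valid x : P_cycle R n p x -> dotp R T2 bfun x <= gamma.
Proof.
move=> [ps [lam [Hps [H1 H2]]]]; rewrite (dotp_conv _ H2).
apply: (@le_trans _ _ (\sum_(i < size ps) lam i * gamma)); last by rewrite -mulr_suml H1 mul1r.
apply: ler_sum => i _; have [[c [Hc Hv]] Hl] := Hps i (ltn_ord i).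
apply: ler_wpM2l => //; rewrite (dotp_ext _ Hv).
case: (boolP (om \in c)) => Hm; last first.
  by rewrite dotp_b_internal //; apply: Hgam; apply: cycle_Dn_D.
have [t [Ht Hmem]] := cycle_with_om Hc Hm.
have [Hp H0 Hm'] := cyc_pth Ht.
have -> : dotp R T2 bfun (incid R n (arcDn n) (cycle_arcs n c)) =
          dotp R T2 bfun (Phi (vpath (pth t))).
  by apply: dotp_ext => e; rewrite /vpath incid_pth // /incid Hmem.
rewrite dotp_bPhi (Ppath_out0 (vpath_in Hp)) mulr1.
have := Hval (vpath_in Hp); lra.
Qed.

Lemma free_cons_lf (T : finType) (X : seq {ffun option T -> R^o}) v c :
  free X -> (forall x, x \in X -> lf R T c x = 0) -> lf R T c v != 0 -> free (v :: X).
Proof.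
move=> HX H Hv; rewrite free_cons HX andbT; apply/negP => Hin.
by move: Hv; rewrite (@lf_span R T X c v Hin H) eqxx.
Qed.

Lemma big_opt (T : finType) (F : option T -> R) :
  \sum_o F o = F None + \sum_e F (Some e).
Proof.
rewrite (bigD1 None) //=; congr (_ + _).
rewrite (reindex_omap Some id) //=; last by case.
by apply: eq_bigl => e; rewrite /= eqxx.
Qed.

Lemma lf_hat (T : finType) c (y : T -> R) :
  lf R T c (hat R T y) = c None + \sum_e c (Some e) * y e.
Proof.
by rewrite /lf big_opt ffunE mulr1; congr (_ + _); apply: eq_bigr => e _; rewrite ffunE.
Qed.

Definition F1 (o : option T2) : R := if o is Some e then ((val e).1 == om)%:R else -1.
Definition F2 (o : option T2) : R := if o is Some e then bfun e else - gamma.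

Lemma lfF1_Phi x : P_path R n p x -> lf R T2 F1 (hat2 (Phi x)) = 0.
Proof.
move=> Hx; rewrite lf_hat /=.
have := dotp_Phi (fun e => ((val e).1 == om)%:R) x; rewrite /dotp => ->.
have E : \sum_(e : T1) ((val (phi1 e)).1 == om)%:R * x e = dotp R T1 c0 x.
  by apply: eq_bigr => e _; rewrite /= sw_om.
by rewrite E Ppath_out0 // addNr.
Qed.

Lemma lfF1_C0 C0 : is_p_cycle n (arcDn n) p C0 -> om \notin C0 ->
  lf R T2 F1 (hat2 (chi C0)) = -1.
Proof.
move=> HC Hm; case/and3P: (HC) => _ Hu Ha; rewrite lf_hat /=.
rewrite (sum_incid (fun q => (q.1 == om)%:R)) ?cycle_arcs_uniq // big1_seq ?addr0 //.
move=> q /= Hq; have -> // : (q.1 == om) = false.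
by apply/negbTE; apply: contraNneq Hm => <-; apply: mem_arc1 Hq.
Qed.

Lemma lfF2 y : lf R T2 F2 (hat2 y) = dotp R T2 bfun y - gamma.
Proof. by rewrite lf_hat addrC. Qed.

Lemma Phi_Ppath x : P_path R n p x -> P_cycle R n p (Phi x).
Proof.
move=> [ps [lam [Hps [H1 H2]]]]; exists (map Phi ps), lam; rewrite size_map; split.
  move=> i Hi; have [[s [Hs Hv]] Hl] := Hps i Hi; split => //.
  have [t [E H0 Hm]] := path_decomp Hs; subst s.
  exists (cyc t); split; first exact: pth_cyc.
  move=> e; rewrite (nth_map (fun _ => 0)) // /Phi Hv.
  by have := incid_pth R e H0 Hm; rewrite /Phi.
split=> // e; rewrite /Phi H2; apply: eq_bigr => i _.
by rewrite (nth_map (fun _ => 0)).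
Qed.

Lemma dimU r :
  (forall qs, (forall i, (i < size qs)%N -> P_path R n p (nth (fun _ => 0) qs i)) ->
     aff_indep R T1 qs -> (size qs <= r)%N) -> (\dim U <= r)%N.
Proof.
move=> Hb; have [Y [HY1 [HY2 HY3]]] := @free_sub_map R T2 _ hv allpaths.
rewrite /U -HY3 (eqP HY2) size_map.
have -> : size Y = size (map vpath Y) by rewrite size_map.
apply: Hb.
  move=> i; rewrite size_map => Hi; rewrite (nth_map [::]) //.
  apply: vpath_in; have := HY1 _ (mem_nth [::] Hi).
  by rewrite mem_filter => /andP[].
apply/aff_indep_Phi; apply/aff_indep_free.
by rewrite -!map_comp.
Qed.

Lemma Pcycle_upper C0 r :
  is_p_cycle n (arcDn n) p C0 -> om \notin C0 ->
  (forall qs, (forall i, (i < size qs)%N -> P_path R n p (nth (fun _ => 0) qs i)) ->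
     aff_indep R T1 qs -> (size qs <= r.+1)%N) ->
  forall ps, (forall i, (i < size ps)%N -> P_cycle R n p (nth (fun _ => 0) ps i)) ->
     aff_indep R T2 ps -> (size ps <= r.+2)%N.
Proof.
move=> HC0 Hm0 Hb ps Hps /aff_indep_free Hf.
rewrite -(size_map hat2 ps) -(eqP Hf).
apply: (@leq_trans (\dim (U + <[hat2 (chi C0)]>)%VS)).
  apply: dimvS; apply/span_subvP => x /(nthP 0) [i Hi <-].
  rewrite size_map in Hi; rewrite (nth_map (fun _ => 0)) //.
  by apply: Pcycle_W => //; apply: Hps.
apply: leq_trans (dimv_add_leqif _ _).1 _.
rewrite -[r.+2]addn1; apply: leq_add; first exact: dimU.
by rewrite dim_vline leq_b1.
Qed.

Lemma main r C0 :
  is_p_cycle n (arcD n) p C0 -> weight R n a (cycle_arcs n C0) = gamma ->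
  aff_rank R T1 (P_path R n p) r.+1 ->
  aff_rank R T1 (fun x => P_path R n p x /\ dotp R T1 afun x = a0) r ->
  facet_defining R T2 (P_cycle R n p) bfun gamma.
Proof.
move=> HC0 HwC0 Hrank HrankF.
split; first exact: Pcycle_valid.
have [_ Hm0] : o0 \notin C0 /\ om \notin C0 by apply: cycleD_nodes; case/and3P: HC0.
have HC0' := cycleD_Dn HC0.
have [[ps1 [Hs1 [Hin1 Hind1]]] Hb1] := Hrank.
have [[psF [HsF [HinF HindF]]] HbF] := HrankF.
have Hup := Pcycle_upper HC0' Hm0 Hb1.
have Hlow qs : (forall i, (i < size qs)%N -> P_path R n p (nth (fun _ => 0) qs i)) ->
    aff_indep R T1 qs -> aff_indep R T2 (chi C0 :: map Phi qs).
  move=> Hq Hi; apply/aff_indep_free => /=; apply: (@free_cons_lf _ _ _ F1).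
  - by apply/aff_indep_free; apply/aff_indep_Phi.
  - move=> x /(nthP 0) [i Hi' <-]; rewrite !size_map in Hi'.
    rewrite (nth_map (fun _ => 0)) ?size_map // (nth_map (fun _ => 0)) //.
    by apply: lfF1_Phi; apply: Hq.
  - by rewrite lfF1_C0 // oppr_eq0 oner_eq0.
have HC0in : P_cycle R n p (chi C0) by apply: vertex_in_conv; exists C0.
exists r.+1; split; split.
- exists (chi C0 :: map Phi ps1); split; first by rewrite /= size_map Hs1.
  split; last exact: Hlow.
  case=> [|i] //= ; rewrite size_map => Hi.
  by rewrite (nth_map (fun _ => 0)) //; apply: Phi_Ppath; apply: Hin1.
- exact: Hup.
- exists (chi C0 :: map Phi psF); split; first by rewrite /= size_map HsF.
  split; last by apply: Hlow => // i Hi; have [] := HinF i Hi.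
  case=> [|i] /=; first by move=> _; split => //; rewrite dotp_b_internal.
  rewrite size_map => Hi; rewrite (nth_map (fun _ => 0)) //.
  have [Hx Hd] := HinF i Hi; split; first exact: Phi_Ppath.
  by rewrite dotp_bPhi Ppath_out0 // Hd mulr1 addrC subrK.
- move=> ps Hps Hind.
  have [i [Hi Hy]] : exists i, (i < size ps1)%N /\
      dotp R T1 afun (nth (fun _ => 0) ps1 i) != a0.
    case: (boolP [exists i : 'I_(size ps1), dotp R T1 afun (nth (fun _ => 0) ps1 i) != a0]).
      by move/existsP => [i Hi]; exists i.
    rewrite negb_exists => /forallP H; exfalso.
    have : (size ps1 <= r)%N.
      apply: HbF Hind1 => i Hi; split; first exact: Hin1.
      by have := H (Ordinal Hi); rewrite negbK => /eqP.
    by rewrite Hs1 ltnn.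
  set y := nth (fun _ => 0) ps1 i.
  have Hyin : P_path R n p y by apply: Hin1.
  have := Hup (Phi y :: ps); rewrite /= ltnS; apply.
    case=> [|j] /=; first by move=> _; apply: Phi_Ppath.
    by rewrite ltnS => Hj; have [] := Hps j Hj.
  apply/aff_indep_free => /=; apply: (@free_cons_lf _ _ _ F2).
  - by apply/aff_indep_free.
  - move=> x /(nthP 0) [j Hj <-]; rewrite size_map in Hj.
    rewrite (nth_map (fun _ => 0)) // lfF2; have [_ ->] := Hps j Hj.
    by rewrite subrr.
  - rewrite lfF2 dotp_bPhi Ppath_out0 // mulr1.
    by apply: contra Hy => /eqP H; apply/eqP; lra.
Qed.
End Comb.

Theorem theorem0 (R : realFieldType) (n p : nat)
    (a : node n -> node n -> R) (a0 gamma : R) :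
  (4 <= p)%N -> (p < n)%N ->
  facet_defining R (arcTD n) (P_path R n p) (fun e : arcTD n => a (val e).1 (val e).2) a0 ->
  (exists c, is_p_cycle n (arcD n) p c /\ weight R n a (cycle_arcs n c) = gamma) ->
  (forall c, is_p_cycle n (arcD n) p c -> weight R n a (cycle_arcs n c) <= gamma) ->
  facet_defining R (arcTDn n) (P_cycle R n p)
    (fun e : arcTDn n =>
       (if (val e).1 == ord_max then a ord0 (val e).2 else a (val e).1 (val e).2)
       + (if (val e).1 == ord_max then gamma - a0 else 0))
    gamma.
Proof.
move=> Hp4 Hpn [Hval [r [Hrank HrankF]]] [C0 [HC0 HwC0]] Hgam.
have n0 : (0 < n)%N by lia.
exact: (main n0 Hp4 Hpn Hval Hgam HC0 HwC0 Hrank HrankF).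
Qed.
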